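(* The only normal subgroups of $G=S(2^\infty)\ltimes \widetilde C(X;\mathbb{Z}_2)$ are $\{e\}$, $\widetilde C(X;\mathbb{Z}_2)$ and $G$.
   Context: For $n\ge1$ let $S(2^n)$ be the symmetric group of the finite set $\{0,1\}^n$, embedded in $S(2^{n+1})$ via $s\mapsto\tilde s$, $\tilde s(x,y)=(s(x),y)$ ($x\in\{0,1\}^n$, $y\in\{0,1\}$); $S(2^\infty)=\bigcup_n S(2^n)$. Let $X=\{0,1\}^{\mathbb N}$; $S(2^\infty)$ acts on $X$ by homeomorphisms via $s(x,y)=(s(x),y)$ for $s\in S(2^n)$, $x\in\{0,1\}^n$, $y\in\{0,1\}^{\mathbb N}$. $C(X;\mathbb Z_2)$ is the abelian group of continuous maps $X\to\mathbb Z_2$ under pointwise addition; its elements are $f_A=\mathbf 1_A$ for clopen $A\subseteq X$, with $f_Af_B=f_{A\triangle B}$. $S(2^\infty)$ acts by $g\cdot f_A=f_{g(A)}$. The constant functions $\{f_\emptyset,f_X\}$ form an invariant subgroup and $\widetilde C(X;\mathbb Z_2)$ is the quotient group; $\widetilde f_A$ denotes the class of $f_A$ (so $\widetilde f_A=\widetilde f_{X\setminus A}$). $G=S(2^\infty)\ltimes\widetilde C(X;\mathbb Z_2)$, with $g\widetilde f_Ag^{-1}=\widetilde f_{g(A)}$. *)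

(* Defs.v *)
From HB Require Import structures.
From mathcomp Require Import all_boot all_order all_algebra all_fingroup.
From mathcomp Require Import all_classical all_reals topology cantor.

Set Implicit Arguments.
Unset Strict Implicit.
Unset Printing Implicit Defensive.

Definition X : Type := cantor_space.

(* The action on X of s in S(2^n) = Sym({0,1}^n):
   s(x,y) = (s(x), y) for x in {0,1}^n, y in {0,1}^N. *)
Definition sact (n : nat) (s : {perm {ffun 'I_n -> bool}}) (x : X) : X :=
  fun i : nat =>
    let p : {ffun 'I_n -> bool} := [ffun j : 'I_n => x (nat_of_ord j)] in
    match (insub i : option 'I_n) with
    | Some j => s p j
    | None => x i
    end.

(* Candidate elements of G = S(2^oo) ⋉ C~(X;Z2), written s·f~ :
   gf = the permutation s (as a map on X), gb = its inverse, cf = a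
   representative f of the class f~ in C(X;Z2)/{constants}. *)
Record Gc := mkG { gf : X -> X; gb : X -> X; cf : X -> bool }.

Definition inG (a : Gc) : Prop :=
  (exists (n : nat) (s : {perm {ffun 'I_n -> bool}}),
      (forall x, gf a x = sact s x) /\ (forall x, gb a x = sact s^-1 x))
  /\ continuous (cf a).

Definition G_eq (a b : Gc) : Prop :=
  (forall x, gf a x = gf b x) /\
  ((forall x, cf a x = cf b x) \/ (forall x, cf a x = ~~ cf b x)).

(* group law: (s f)(t k) = (s t) (t^-1 f t) k, and t^-1 f_A t = f_{t^-1 A} = f_A o t *)
Definition gmul (a b : Gc) : Gc :=
  mkG (fun x => gf a (gf b x)) (fun x => gb b (gb a x))
      (fun x => addb (cf a (gf b x)) (cf b x)).

(* (s f)^-1 = f s^-1 = s^-1 (s f s^-1) = s^-1 f_{s(A)}, f_{s(A)} = f_A o s^-1 *)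
Definition ginv (a : Gc) : Gc :=
  mkG (gb a) (gf a) (fun x => cf a (gb a x)).

Definition gone : Gc := mkG id id (fun _ => false).

(* N is a normal subgroup of G (N is a predicate on representatives,
   required to be saturated w.r.t. equality in G). *)
Definition normal_subgroup (N : Gc -> Prop) : Prop :=
  (forall a, N a -> inG a) /\
  (forall a b, N a -> inG b -> G_eq a b -> N b) /\
  N gone /\
  (forall a b, N a -> N b -> N (gmul a b)) /\
  (forall a, N a -> N (ginv a)) /\
  (forall a b, N a -> inG b -> N (gmul (gmul b a) (ginv b))).

(* Main.v *)
Require Import Defs.
From HB Require Import structures.
From mathcomp Require Import all_boot all_order all_algebra all_fingroup.
From mathcomp Require Import all_classical all_reals topology cantor.
From mathcomp Require Import all_solvable.
Import numFieldTopology.Exports.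
Set Implicit Arguments.
Unset Strict Implicit.
Unset Printing Implicit Defensive.
Local Open Scope classical_set_scope.

Definition cyl (x : X) (n : nat) : set X := [set y | forall i, (i < n)%N -> y i = x i].

Lemma bool_nbhs1 (b : bool) : nbhs b [set b].
Proof. by []. Qed.

Lemma cyl_nbhs (x : X) n : nbhs x (cyl x n).
Proof.
elim: n => [|n IH].
  by apply: filterS (filterT); move=> y _ i.
have h : nbhs x ((@proj nat (fun _ => bool) n) @^-1` [set x n]).
  apply: (@proj_continuous nat (fun _ => bool) n x). exact: bool_nbhs1.
apply: filterS (filterI IH h) => y [H1 H2] i; rewrite ltnS leq_eqVlt.
by case/orP => [/eqP->|/H1//]; exact: H2.
Qed.

Definition lvl (m : nat) (c : X -> bool) :=
  forall x y, (forall i, (i < m)%N -> x i = y i) -> c x = c y.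

Lemma lvl_cont m c : lvl m c -> continuous c.
Proof.
move=> Hc x A /= HA.
have Ac : A (c x) by exact: nbhs_singleton.
apply: filterS (cyl_nbhs x m) => y Hy /=.
by rewrite (Hc y x) // => i /Hy.
Qed.

Definition cylF (x : X) : set_system X := fun A => exists n, cyl x n `<=` A.

Lemma cylF_filter x : Filter (cylF x).
Proof.
constructor.
- by exists 0.
- move=> A B [n HA] [m HB]; exists (maxn n m) => y Hy; split.
    by apply: HA => i Hi; apply: Hy; rewrite leq_max Hi.
  by apply: HB => i Hi; apply: Hy; rewrite leq_max Hi orbT.
- by move=> P Q PQ [n HP]; exists n => y /HP /PQ.
Qed.

Lemma nbhs_cyl (x : X) A : nbhs x A -> exists n, cyl x n `<=` A.
Proof.
move=> HA.
have : cylF x --> (x : cantor_space).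
  apply/(@cvg_sup _ _ _ _ _ (cylF_filter x)) => i.
  move=> B /=. case=> U [[V oV <-] Ux] UB.
  exists i.+1 => y Hy; apply: UB => /=; by rewrite Hy.
by move/(_ A HA).
Qed.

Lemma cont_lvl (c : X -> bool) : continuous c -> exists m, lvl m c.
Proof.
move=> Hc.
pose U n : set cantor_space := [set x | forall y, (forall i, (i < n)%N -> y i = x i) -> c y = c x].
have Uop n : open (U n).
  rewrite openE => x Ux; rewrite /interior.
  apply: filterS (cyl_nbhs x n) => z Hz y Hy.
  rewrite (Ux y); last by move=> i Hi; rewrite Hy // Hz.
  by rewrite (Ux z).
have Ucov : [set: cantor_space] `<=` cover [set: nat] U.
  move=> x _.
  have := Hc x [set c x] (@bool_nbhs1 (c x)).
  case/nbhs_cyl => n Hn; exists n => // y Hy; exact: Hn.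
have := cantor_space_compact; rewrite compact_cover => /(_ nat [set: nat] U).
case=> [n _|//|D _ HD]; first exact: Uop.
exists (\max_(i <- finmap.enum_fset D) i)%N => x y Hxy.
have [n Dn Un] := HD y I.
have Hn : (n <= \max_(i <- finmap.enum_fset D) i)%N.
  by apply: leq_bigmax_seq.
have e1 : c x = c y := Un x (fun i Hi => (Hxy i (leq_trans Hi Hn))).
by [].
Qed.

Local Close Scope classical_set_scope.
Set Implicit Arguments.
Unset Strict Implicit.
Unset Printing Implicit Defensive.
Local Open Scope group_scope.

Definition T n := {ffun 'I_n -> bool}.
Definition pre n (x : X) : T n := [ffun j : 'I_n => x (nat_of_ord j)].
Definition ext n (w : T n) : X :=
  fun i => match (insub i : option 'I_n) with Some j => w j | None => false end.

Definition agree n (x y : X) := forall i, (i < n)%N -> x i = y i.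

Lemma preE n x (j : 'I_n) : pre n x j = x j.
Proof. by rewrite ffunE. Qed.

Lemma pre_agree n x y : pre n x = pre n y <-> agree n x y.
Proof.
split=> [H i Hi|H].
  by have := congr1 (fun f : T n => f (Ordinal Hi)) H; rewrite !preE.
by apply/ffunP => j; rewrite !preE; apply: H.
Qed.

Lemma ext_lo n (w : T n) (j : 'I_n) : ext w j = w j.
Proof. by rewrite /ext valK. Qed.

Lemma ext_hi n (w : T n) i : (n <= i)%N -> ext w i = false.
Proof. by move=> H; rewrite /ext insubF // ltnNge H. Qed.

Lemma pre_ext n (w : T n) : pre n (ext w) = w.
Proof. by apply/ffunP => j; rewrite preE ext_lo. Qed.

Lemma sact_lo n (s : {perm T n}) x (j : 'I_n) : sact s x j = s (pre n x) j.
Proof. by rewrite /sact valK. Qed.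

Lemma sact_hi n (s : {perm T n}) x i : (n <= i)%N -> sact s x i = x i.
Proof. by move=> H; rewrite /sact insubF // ltnNge H. Qed.

Lemma sact_lt n (s : {perm T n}) x i (Hi : (i < n)%N) : sact s x i = s (pre n x) (Ordinal Hi).
Proof. by rewrite -(sact_lo s x (Ordinal Hi)). Qed.

Lemma pre_sact n (s : {perm T n}) x : pre n (sact s x) = s (pre n x).
Proof. by apply/ffunP => j; rewrite preE sact_lo. Qed.

Lemma Xext (x y : X) : (forall i, x i = y i) -> x = y.
Proof. move=> H; exact: boolp.funext. Qed.

Lemma sact_eq n (s : {perm T n}) x y :
  (forall i, (n <= i)%N -> x i = y i) -> pre n y = s (pre n x) -> sact s x = y.
Proof.
move=> Hhi Hlo; apply: Xext => i; case: (ltnP i n) => Hi.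
  by rewrite (sact_lt s x Hi) -Hlo preE.
by rewrite sact_hi // Hhi.
Qed.

Lemma sactM n (s t : {perm T n}) x : sact (s * t) x = sact t (sact s x).
Proof.
apply: sact_eq => [i Hi|]; first by rewrite !sact_hi.
by rewrite !pre_sact permM.
Qed.

Lemma sact1 n x : sact (1 : {perm T n}) x = x.
Proof. by apply: sact_eq => // ; rewrite perm1. Qed.

Lemma sactK n (s : {perm T n}) x : sact s^-1 (sact s x) = x.
Proof. by rewrite -sactM mulgV sact1. Qed.

Lemma sactKV n (s : {perm T n}) x : sact s (sact s^-1 x) = x.
Proof. by rewrite -sactM mulVg sact1. Qed.

Lemma sact_inj n (s t : {perm T n}) : (forall x, sact s x = sact t x) -> s = t.
Proof.
move=> H; apply/permP => w.
by rewrite -(pre_ext w) -!pre_sact H.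
Qed.

Lemma sact_agree n (s : {perm T n}) x y : agree n x y -> agree n (sact s x) (sact s y).
Proof. by move/pre_agree => H; apply/pre_agree; rewrite !pre_sact H. Qed.

Lemma mkperm n (F : X -> X) : injective F ->
  (forall x i, (n <= i)%N -> F x i = x i) ->
  (forall x y, agree n x y -> agree n (F x) (F y)) ->
  exists s : {perm T n}, forall x, sact s x = F x.
Proof.
move=> Finj Fhi Flo.
pose f (w : T n) : T n := pre n (F (ext w)).
have finj : injective f.
  move=> w1 w2 /pre_agree H.
  have : F (ext w1) = F (ext w2).
    apply: Xext => i; case: (ltnP i n) => Hi; first exact: H.
    by rewrite !Fhi // !ext_hi.
  by move/Finj/(congr1 (pre n)); rewrite !pre_ext.
exists (perm finj) => x; apply: sact_eq => [i Hi|]; first by rewrite Fhi.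
rewrite permE /f; apply/pre_agree; apply: Flo.
by apply/pre_agree; rewrite pre_ext.
Qed.

Lemma sact_agree_ge n m (s : {perm T n}) x y : (n <= m)%N ->
  agree m x y -> agree m (sact s x) (sact s y).
Proof.
move=> Hnm H i Him; case: (ltnP i n) => Hi.
  have H' : agree n x y by move=> j Hj; apply: H; exact: leq_trans Hj Hnm.
  exact: (sact_agree s H').
by rewrite !sact_hi // H.
Qed.

Lemma lift_ex n m (s : {perm T n}) : (n <= m)%N ->
  exists t : {perm T m}, forall x, sact t x = sact s x.
Proof.
move=> Hnm; apply: mkperm.
- exact: can_inj (sactK s).
- by move=> x i Hi; rewrite sact_hi // (leq_trans Hnm Hi).
- by move=> x y; apply: sact_agree_ge.
Qed.

Definition flipk k (x : X) : X := fun i => if i == k then ~~ x i else x i.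

Lemma flipkK k : involutive (flipk k).
Proof. by move=> x; apply: Xext => i; rewrite /flipk; case: eqP => // _; rewrite negbK. Qed.

Lemma sact_flip k (u : {perm T k}) x : sact u (flipk k x) = flipk k (sact u x).
Proof.
apply: Xext => i; rewrite /flipk; case: (ltnP i k) => Hi.
  rewrite (sact_lt u _ Hi) (sact_lt u x Hi) (ltn_eqF Hi).
  congr (u _ _); apply/pre_agree => j Hj; rewrite /flipk (ltn_eqF Hj) //.
rewrite !sact_hi //; case: eqP => // ->; by rewrite sact_hi.
Qed.

Lemma lift1_even k (u : {perm T k}) (v : {perm T k.+1}) :
  (forall x, sact v x = sact u x) -> ~~ odd_perm v.
Proof.
move=> Hv.
pose F0 x := if x k then x else sact u x.
pose G0 x := if x k then x else sact u^-1 x.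
pose F1 x := if x k then sact u x else x.
have F0K : cancel F0 G0.
  move=> x; rewrite /F0 /G0; case Hk: (x k); rewrite ?Hk //.
  by rewrite sact_hi // Hk sactK.
have Flvl : forall (w : {perm T k}) x y, agree k.+1 x y -> agree k.+1 (if x k then x else sact w x) (if y k then y else sact w y).
  move=> w x y H; rewrite (H k (ltnSn k)); case: (y k) => //.
  exact: sact_agree_ge.
have [u0 Hu0] : exists u0 : {perm T k.+1}, forall x, sact u0 x = F0 x.
  apply: mkperm; first exact: can_inj F0K.
    by move=> x i Hi; rewrite /F0; case: (x k) => //; rewrite sact_hi // ltnW.
  exact: Flvl.
have [sg Hsg] : exists sg : {perm T k.+1}, forall x, sact sg x = flipk k x.
  apply: mkperm; first exact: can_inj (flipkK k).
    by move=> x i Hi; rewrite /flipk; case: eqP => // E; move: Hi; rewrite E ltnn.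
  by move=> x y H i Hi; rewrite /flipk H.
have Hsgi x : sact sg^-1 x = flipk k x.
  by rewrite -{1}(flipkK k x) -Hsg sactK.
have Fk x : flipk k x k = ~~ x k by rewrite /flipk eqxx.
have -> : v = u0 * (u0 ^ sg).
  apply: sact_inj => x; rewrite Hv /conjg !sactM Hsgi Hu0 !Hsg Hu0 /F0.
  rewrite Fk; case Hk: (x k) => /=.
    by rewrite Hk /= sact_flip flipkK.
  by rewrite sact_hi // Hk /= flipkK.
by rewrite odd_permM odd_permJ addbb.
Qed.

Lemma lift_even n m (s : {perm T n}) (t : {perm T m}) : (n < m)%N ->
  (forall x, sact t x = sact s x) -> ~~ odd_perm t.
Proof.
case: m t => // m t Hnm Ht.
have [t' Ht'] := lift_ex s Hnm.
apply: (lift1_even (u := t')) => x; by rewrite Ht Ht'.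
Qed.

Local Close Scope group_scope.
Set Implicit Arguments.
Unset Strict Implicit.
Unset Printing Implicit Defensive.
Local Open Scope group_scope.

Definition elt n (u : {perm T n}) : Gc := mkG (sact u) (sact u^-1) (fun _ => false).

Lemma inG_elt n (u : {perm T n}) : inG (elt u).
Proof. by split; [exists n, u | exact: cst_continuous]. Qed.

Lemma inG_idc (c : X -> bool) : continuous c -> inG (mkG id id c).
Proof.
move=> Hc; split => //; exists 0%N, (1 : {perm T 0}); split => x /=.
  by rewrite sact1.
by rewrite invg1 sact1.
Qed.

Definition V (N : Gc -> Prop) (c : X -> bool) :=
  exists b, N b /\ (forall x, gf b x = x) /\ (forall x, cf b x = c x).

Lemma V0 N : normal_subgroup N -> V N (fun _ => false).
Proof. by case=> _ [_ [H1 _]]; exists gone. Qed.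

Lemma Vmul N c1 c2 : normal_subgroup N -> V N c1 -> V N c2 -> V N (fun x => c1 x (+) c2 x).
Proof.
case=> _ [_ [_ [Hm _]]] [b1 [N1 [g1 f1]]] [b2 [N2 [g2 f2]]].
exists (gmul b1 b2); split; first exact: Hm.
by split=> x /=; rewrite ?g2 ?g1 ?f1 ?f2.
Qed.

Lemma Vconj N c n (r : {perm T n}) : normal_subgroup N -> V N c ->
  V N (fun x => c (sact r^-1 x)).
Proof.
case=> _ [_ [_ [_ [_ Hc]]]] [b [Nb [gb fb]]].
exists (gmul (gmul (elt r) b) (ginv (elt r))); split; first exact: Hc _ _ Nb (inG_elt r).
split=> x /=; first by rewrite gb sactKV.
by rewrite fb addbF.
Qed.

Lemma Vext N c c' : V N c -> (forall x, c x = c' x) -> V N c'.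
Proof. by case=> b [Nb [gb fb]] E; exists b; split=> //; split=> // x; rewrite fb E. Qed.

Lemma Vneg N c c' : normal_subgroup N -> V N c -> continuous c' ->
  (forall x, c' x = ~~ c x) -> V N c'.
Proof.
case=> _ [Hs _] [b [Nb [gb fb]]] Hc' E.
exists (mkG id id c'); split; last by [].
apply: (Hs b) => //; first exact: inG_idc.
split; first by move=> x /=; exact: gb.
by right => x /=; rewrite fb E negbK.
Qed.

Lemma lvl_mono k M c : (k <= M)%N -> lvl k c -> lvl M c.
Proof. by move=> H Hc x y Hxy; apply: Hc => i Hi; apply: Hxy; exact: leq_trans Hi H. Qed.

Lemma lvl_ext M c x : lvl M c -> c x = c (ext (pre M x)).
Proof.
move=> Hc; apply: Hc => i Hi.
by rewrite (ext_lo (pre M x) (Ordinal Hi)) preE.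
Qed.

Definition ind M (S : {set T M}) (x : X) : bool := pre M x \in S.

Lemma ind_lvl M S : lvl M (@ind M S).
Proof. by move=> x y /pre_agree H; rewrite /ind H. Qed.

Lemma preS_eq M x y : (pre M.+1 x == pre M.+1 y) = (pre M x == pre M y) && (x M == y M).
Proof.
apply/eqP/andP => [/pre_agree H|[/eqP/pre_agree H /eqP H']].
  split; apply/eqP; last exact: H.
  by apply/pre_agree => i Hi; apply: H; exact: ltnW.
apply/pre_agree => i; rewrite ltnS leq_eqVlt => /orP [/eqP ->//|]; exact: H.
Qed.

Lemma card_TM M : #|T M| = (2 ^ M)%N.
Proof. by rewrite card_ffun card_bool card_ord. Qed.

Lemma LC N (HN : normal_subgroup N) a : N a -> (forall x, gf a x = x) ->
  forall x1 x2, cf a x1 = true -> cf a x2 = false ->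
  forall c, continuous c -> V N c.
Proof.
move=> Na ga x1 x2 h1 h2 c Hc.
have [n Ln] : exists n, lvl n (cf a).
  by apply: cont_lvl; case: HN => HG _; case: (HG a Na).
have [m Lm] := cont_lvl Hc.
pose M := (maxn n m).+1.
pose K := M.+1.
have LnM : lvl K (cf a) by apply: lvl_mono Ln; exact: leq_trans (leq_maxl n m) (leqW (leqnSn _)).
have LmM : lvl M c by apply: lvl_mono Lm; rewrite ltnW // ltnS leq_maxr.
have Va : V N (cf a) by exists a.
pose g0 (w : T K) := cf a (ext w).
have g0E x : cf a x = g0 (pre K x) by exact: lvl_ext.
pose u := pre K x1; pose v := pre K x2.
have gu : g0 u = true by rewrite -g0E.
have gv : g0 v = false by rewrite -g0E.
have uv : u != v by apply/eqP => E; move: gu; rewrite E gv.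
have Vp0 : V N (ind [set u; v]).
  apply: Vext (Vmul HN Va (Vconj (tperm u v) HN Va)) _ => x.
  rewrite /ind g0E (g0E (sact _ x)) pre_sact tpermV.
  case: tpermP => [->|->|Hu Hv]; rewrite ?in_set2 ?eqxx ?orbT ?gu ?gv //.
  by rewrite addbb; apply/esym/negbTE; rewrite negb_or; apply/andP; split; apply/eqP.
have Vp : forall u' v' : T K, u' != v' -> V N (ind [set u'; v']).
  move=> u' v' Huv.
  pose v1 := tperm u u' v.
  pose r := tperm u u' * tperm v1 v'.
  have ru : r u = u'.
    rewrite permM tpermL tpermD //.
      apply/eqP => E; move/eqP: uv; apply; apply: (@perm_inj _ (tperm u u')).
      by rewrite tpermL -/v1 E.
    by apply/eqP => E; move: Huv; rewrite E eqxx.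
  have rv : r v = v' by rewrite permM -/v1 tpermL.
  apply: Vext (Vconj r HN Vp0) _ => x.
  rewrite /ind pre_sact -{2}(permKV r (pre K x)) !in_set2.
  by rewrite -ru -rv !(inj_eq (@perm_inj _ r)).
have Vsing : forall w : T M, V N (ind [set w]).
  move=> w.
  pose a1 := pre K (ext w); pose b1 := pre K (flipk M (ext w)).
  have eM : ext w M = false by rewrite ext_hi.
  have fM : flipk M (ext w) M = true by rewrite /flipk eqxx eM.
  have ab : a1 != b1.
    apply/eqP => /pre_agree /(_ M (ltnSn M)); by rewrite eM fM.
  have pf : pre M (flipk M (ext w)) = w.
    rewrite -{2}(pre_ext w); apply/pre_agree => i Hi; by rewrite /flipk (ltn_eqF Hi).
  apply: Vext (Vp a1 b1 ab) _ => x.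
  rewrite /ind in_set2 finset.in_set1 /a1 /b1 !(preS_eq M) pre_ext pf eM fM.
  by case: (x M); rewrite ?andbT ?andbF ?orbF.
have Vset : forall k (S : {set T M}), #|S| = k -> V N (ind S).
  elim=> [|k IH] S HS.
    apply: Vext (V0 HN) _ => x; rewrite /ind.
    by move/eqP: HS; rewrite cards_eq0 => /eqP ->; rewrite inE.
  have : (0 < #|S|)%N by rewrite HS.
  rewrite card_gt0 => /set0Pn [u' Su'].
  have H1 : #|S :\ u'| = k by move: HS; rewrite (cardsD1 u') Su' add1n => -[].
  apply: Vext (Vmul HN (IH _ H1) (Vsing u')) _ => x.
  rewrite /ind in_setD1 finset.in_set1.
  have [->|Hx] := eqVneq (pre M x) u'; first by rewrite Su'.
  by rewrite /= addbF.
apply: Vext (Vset _ [set w | c (ext w)] erefl) _ => x.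
by rewrite /ind inE -lvl_ext.
Qed.

Definition P (N : Gc -> Prop) M (u : {perm T M}) :=
  exists b, N b /\ (forall x, gf b x = sact u x) /\ (forall x, cf b x = false).

Lemma P1 N M : normal_subgroup N -> P N (1 : {perm T M}).
Proof. by case=> _ [_ [H1 _]]; exists gone; split=> //; split=> x //=; rewrite sact1. Qed.

Lemma PM N M (u v : {perm T M}) : normal_subgroup N -> P N u -> P N v -> P N (v * u).
Proof.
case=> _ [_ [_ [Hm _]]] [b1 [N1 [g1 f1]]] [b2 [N2 [g2 f2]]].
exists (gmul b1 b2); split; first exact: Hm.
by split=> x /=; rewrite ?g2 ?g1 ?f1 ?f2 ?sactM.
Qed.

Lemma PJ N M (u w : {perm T M}) : normal_subgroup N -> P N u -> P N (u ^ w).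
Proof.
case=> _ [_ [_ [_ [_ Hc]]]] [b [Nb [gb fb]]].
exists (gmul (gmul (elt w) b) (ginv (elt w))); split; first exact: Hc _ _ Nb (inG_elt w).
split=> x /=; first by rewrite gb /conjg !sactM.
by rewrite fb.
Qed.

Lemma Pall N n (s : {perm T n}) x0 : normal_subgroup N -> P N s -> sact s x0 <> x0 ->
  forall p (t : {perm T p}), P N t.
Proof.
move=> HN Ps Hx0 p t.
pose M := (maxn n p).+3.
have nM : (n < M)%N by rewrite /M ltnS leqW // leqW // leq_maxl.
have pM : (p < M)%N by rewrite /M ltnS leqW // leqW // leq_maxr.
have [s' Hs'] := lift_ex s (ltnW nM).
have [t' Ht'] := lift_ex t (ltnW pM).
pose H := [set u : {perm T M} | `[< P N u >]].
have HP u : (u \in H) = `[< P N u >] by rewrite inE.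
have Hgs : group_set H.
  apply/group_setP; split; first by rewrite HP; apply/asboolP; exact: P1.
  move=> u v; rewrite !HP => /asboolP Pu /asboolP Pv; apply/asboolP.
  exact: PM HN Pv Pu.
pose Hg := Group Hgs.
have nH : Hg <| (finset.setTfor _ : {set {perm T M}}).
  apply/normalP; split; first exact: finset.subsetT.
  move=> w _; apply/eqP; rewrite eqEcard cardJg leqnn andbT.
  apply/fintype.subsetP => u; rewrite mem_conjg !HP => /asboolP Pu; apply/asboolP.
  by rewrite -(conjgKV w u); exact: PJ.
have nA := normalGI (finset.subsetT 'Alt_(T M)) nH.
have card5 : (4 < #|T M|)%N.
  rewrite card_TM; apply: (@leq_trans (2 ^ 3)) => //.
  by rewrite leq_exp2l // /M !ltnS.
have Ps' : s' \in ('Alt_(T M) :&: Hg)%G.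
  rewrite /= inE Alt_even (lift_even nM Hs') /= HP; apply/asboolP.
  case: Ps => b [Nb [gb fb]]; exists b; split=> //; split=> // x; by rewrite gb Hs'.
case/simpleP: (simple_Alt5 card5) => _ /(_ _ nA) [E|E].
  move: Ps'; rewrite E => /set1gP E'.
  by exfalso; apply: Hx0; rewrite -Hs' E' sact1.
have : t' \in ('Alt_(T M) :&: Hg)%G.
  rewrite E Alt_even; exact: (lift_even pM Ht').
rewrite /= inE HP => /andP [_ /asboolP [b [Nb [gb fb]]]].
by exists b; split=> //; split=> // x; rewrite gb Ht'.
Qed.

Local Close Scope group_scope.

Theorem proposition3p1 (N : Gc -> Prop) :
  normal_subgroup N ->
  (* N = {e} *)
  (forall a, N a <-> inG a /\ G_eq a gone) \/
  (* N = C~(X;Z2) *)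
  (forall a, N a <-> inG a /\ (forall x, gf a x = x)) \/
  (* N = G *)
  (forall a, N a <-> inG a).
Proof.
move=> HN; have HN' := HN; case: HN' => HG [Hs [H1 [Hm [Hi Hc]]]].
case: (pselect (exists a, N a /\ exists x, gf a x <> x)) => [[a [Na [x0 Hx0]]]|noB].
  right; right.
  have [[n [s [gs gbs]]] ca] := HG a Na.
  pose y0 := gf a x0.
  have gy0 : gb a y0 = x0 by rewrite /y0 gs gbs sactK.
  have nag : ~ agree n x0 y0.
    move=> Hag; apply: Hx0; rewrite -/y0; apply: Xext => i.
    case: (ltnP i n) => Hj; first by rewrite Hag.
    by rewrite /y0 gs sact_hi.
  pose k (x : X) := pre n.+1 x == pre n.+1 y0.
  have kl : lvl n.+1 k by move=> x y /pre_agree H; rewrite /k H.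
  pose h := mkG id id k.
  have Gh : inG h := inG_idc (lvl_cont kl).
  pose d := gmul (gmul (gmul h a) (ginv h)) (ginv a).
  have Nd : N d by apply: Hm; [exact: Hc | exact: Hi].
  have gd x : gf d x = x by rewrite /= gs gbs sactKV.
  have cd x : cf d x = k x (+) k (gb a x).
    rewrite /= gs gbs sactKV.
    by case: (k x); case: (k _); case: (cf a _).
  have kn x : agree n x x0 -> k x = false.
    move=> Hx; apply/negbTE/negP => /eqP /pre_agree H; apply: nag => i Hj.
    by rewrite -Hx // H // ltnW.
  have Vall := LC HN Nd gd (x1 := y0) (x2 := flipk n y0).
  have VC : forall c, continuous c -> V N c.
    apply: Vall.
      by rewrite cd gy0 (kn x0) // /k eqxx.
    have fa x : agree n (flipk n x) x by move=> i Hj; rewrite /flipk (ltn_eqF Hj).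
    have kf : k (flipk n y0) = false.
      apply/negbTE/negP => /eqP /pre_agree /(_ n (ltnSn n)).
      by rewrite /flipk eqxx; case: (y0 n).
    by rewrite cd kf gbs sact_flip -gbs gy0 kn.
  have Ps : P N s.
    have [b2 [Nb2 [g2 f2]]] := VC _ ca.
    exists (gmul a b2); split; first exact: Hm.
    by split=> x /=; rewrite g2 ?gs // f2 addbb.
  have Hx0' : sact s x0 <> x0 by rewrite -gs.
  move=> b; split; first exact: HG.
  move=> Gb; have [[p [t [gt gbt]]] cb] := Gb.
  have [b1 [Nb1 [g1 f1]]] := Pall HN Ps Hx0' t.
  have [b2 [Nb2 [g2 f2]]] := VC _ cb.
  apply: (Hs (gmul b1 b2)) => //; first exact: Hm.
  split=> [x|]; first by rewrite /= g2 g1 gt.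
  by left => x /=; rewrite g2 f1 f2.
have idB : forall a, N a -> forall x, gf a x = x.
  move=> a Na x; apply: contrapT => H; apply: noB; exists a; split=> //; by exists x.
case: (pselect (exists a, N a /\ ~ G_eq a gone)) => [[a [Na Hna]]|noA].
  right; left.
  have [x1 h1] : exists x1, cf a x1 = true.
    apply: contrapT => H; apply: Hna; split=> [x|]; first exact: idB.
    left => x /=; case E: (cf a x) => //; exfalso; apply: H; by exists x.
  have [x2 h2] : exists x2, cf a x2 = false.
    apply: contrapT => H; apply: Hna; split=> [x|]; first exact: idB.
    right => x /=; case E: (cf a x) => //; exfalso; apply: H; by exists x.
  have VC := LC HN Na (idB a Na) h1 h2.
  move=> b; split; first by move=> Nb; split; [exact: HG | exact: idB].
  case=> Gb gb.
  have [b' [Nb' [g' f']]] := VC _ (proj2 Gb).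
  apply: (Hs b') => //; split=> [x|]; first by rewrite g' gb.
  by left => x; exact: f'.
left => a; split.
  move=> Na; split; first exact: HG.
  by apply: contrapT => H; apply: noA; exists a.
case=> Ga [E1 E2]; apply: (Hs gone) => //; split=> [x|]; first by rewrite -E1.
by case: E2 => E; [left|right] => x; rewrite E.
Qed.
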